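(* Let $(G,\prec)$ be a POP-graph with input edges $i_1\prec i_2\prec\cdots\prec i_m$ and output edges $o_1\prec\cdots\prec o_n$. (1) For $e\in E(G)\setminus I(G)$ and $1\le k\le m$: $e\in P_k$ if and only if $i^+(e)=i_k$. (2) For $e\in E(G)\setminus O(G)$ and $1\le k\le n$: $e\in Q_k$ if and only if $o^-(e)=o_k$.
   Context: A progressive graph is a finite directed acyclic graph (parallel edges allowed) in which every source and every sink has degree one; degree-one vertices are boundary vertices. $I(G)$ is the set of input edges (initial vertex a boundary vertex), $O(G)$ the set of output edges (terminal vertex a boundary vertex). For edges write $e\to e'$ if $e\neq e'$ and there is a directed path whose first edge is $e$ and last edge is $e'$. A planar order on $G$ is a linear order $\prec$ on $E(G)$ such that (P1) $e_1\to e_2$ implies $e_1\prec e_2$; (P2) if $e_1\prec e_2\prec e_3$ and $e_1\to e_3$ then $e_1\to e_2$ or $e_2\to e_3$. A POP-graph is a progressive graph with a planar order. $i^+(e)$ is the $\prec$-maximum of $\{i\in I(G): i\to e\}$ and $o^-(e)$ the $\prec$-minimum of $\{o\in O(G): e\to o\}$. Intervals: $P_k=\{e: i_k\prec e\prec i_{k+1}\}$ for $1\le k\le m-1$, $P_m=\{e: i_m\prec e\}$; $Q_1=\{e: e\prec o_1\}$, $Q_k=\{e: o_{k-1}\prec e\prec o_k\}$ for $2\le k\le n$. *)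

(* Defs.v *)
From mathcomp Require Import all_boot.
Set Implicit Arguments. Unset Strict Implicit. Unset Printing Implicit Defensive.

Section POP.
Variables (V E : finType) (src tgt : E -> V).

Definition adj : rel E := fun a b => tgt a == src b.

Definition reach (e e' : E) : Prop :=
  e <> e' /\ exists s : seq E, path adj e s /\ last e s = e'.

Definition acyclic : Prop :=
  forall (e : E) (s : seq E), path adj e s -> tgt (last e s) <> src e.

Definition indeg (v : V) : nat := #|[set e | tgt e == v]|.
Definition outdeg (v : V) : nat := #|[set e | src e == v]|.
Definition deg (v : V) : nat := indeg v + outdeg v.

Definition is_source (v : V) : bool := indeg v == 0.
Definition is_sink (v : V) : bool := outdeg v == 0.
Definition boundary (v : V) : bool := deg v == 1.

Definition progressive : Prop :=
  acyclic /\ (forall v, is_source v -> boundary v)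
          /\ (forall v, is_sink v -> boundary v).

Definition is_input (e : E) : bool := boundary (src e).
Definition is_output (e : E) : bool := boundary (tgt e).

Definition linear_order (lt : rel E) : Prop :=
  (forall x, ~~ lt x x) /\
  (forall x y z, lt x y -> lt y z -> lt x z) /\
  (forall x y, x != y -> lt x y || lt y x).

Definition planar_order (lt : rel E) : Prop :=
  linear_order lt /\
  (forall e1 e2, reach e1 e2 -> lt e1 e2) /\
  (forall e1 e2 e3, lt e1 e2 -> lt e2 e3 -> reach e1 e3 ->
      reach e1 e2 \/ reach e2 e3).

Definition enumerates (P : pred E) (lt : rel E) (m : nat) (f : nat -> E) : Prop :=
  (forall k, 1 <= k <= m -> P (f k)) /\
  (forall k l, 1 <= k -> k < l -> l <= m -> lt (f k) (f l)) /\
  (forall e, P e -> exists2 k, 1 <= k <= m & e = f k).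

Definition is_iplus (lt : rel E) (e i : E) : Prop :=
  is_input i /\ reach i e /\
  (forall j, is_input j -> reach j e -> j = i \/ lt j i).

Definition is_ominus (lt : rel E) (e o : E) : Prop :=
  is_output o /\ reach e o /\
  (forall j, is_output j -> reach e j -> j = o \/ lt o j).

Definition inP (lt : rel E) (m : nat) (inp : nat -> E) (k : nat) (e : E) : bool :=
  if k < m then lt (inp k) e && lt e (inp k.+1) else lt (inp k) e.

Definition inQ (lt : rel E) (out : nat -> E) (k : nat) (e : E) : bool :=
  if k == 1 then lt e (out 1) else lt (out k.-1) e && lt e (out k).

End POP.

(* Main.v *)
Require Import Defs.
From mathcomp Require Import all_boot zify.
From Stdlib Require Import Classical.

Section H.
Variables (V E : finType) (src tgt : E -> V) (lt : rel E).
Hypothesis Hprog : progressive src tgt.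
Hypothesis Hpl : planar_order src tgt lt.

Lemma ltirr x : ~~ lt x x. Proof. by case: Hpl => [[H _] _]. Qed.
Lemma lttr {x y z} : lt x y -> lt y z -> lt x z. Proof. by case: Hpl => [[_ [H _]] _]; apply: H. Qed.
Lemma lttot {x y} : x != y -> lt x y || lt y x. Proof. by case: Hpl => [[_ [_ H]] _]; apply: H. Qed.
Lemma P1 {x y} : reach src tgt x y -> lt x y. Proof. by case: Hpl => [_ [H _]]; apply: H. Qed.
Lemma P2 {e1 e2 e3} : lt e1 e2 -> lt e2 e3 -> reach src tgt e1 e3 ->
      reach src tgt e1 e2 \/ reach src tgt e2 e3.
Proof. by case: Hpl => [_ [_ H]]; apply: H. Qed.
Lemma ltasym {x y} : lt x y -> lt y x -> False.
Proof. move=> a b; have := lttr a b; by rewrite (negbTE (ltirr x)). Qed.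

Lemma ex_ext (r : rel E) (Htr : forall x y z, r x y -> r y z -> r x z)
  (Htot : forall x y, x != y -> r x y || r y x) (P : E -> Prop) x0 :
  P x0 -> exists y, P y /\ forall z, P z -> z = y \/ r z y.
Proof.
suff H : forall s : seq E, (exists x, x \in s /\ P x) ->
   exists y, P y /\ forall z, z \in s -> P z -> z = y \/ r z y.
  move=> Px0; have [|y [Py Hy]] := H (enum E).
    by exists x0; rewrite mem_enum.
  by exists y; split => // z Pz; apply: Hy => //; rewrite mem_enum.
elim=> [|a s IH] [x [xin Px]]; first by rewrite in_nil in xin.
case: (classic (exists x, x \in s /\ P x)) => [ex|nex].
- have [y [Py Hy]] := IH ex.
  case: (classic (P a)) => Pa.
  + case: (eqVneq a y) => [eay|ay]. subst a.
      exists y; split => // z; rewrite in_cons => /orP[/eqP->|zs] Pz; [by left|exact: Hy].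
    case/orP: (Htot _ _ ay) => r1.
    * exists y; split => // z; rewrite in_cons => /orP[/eqP->|zs] Pz; [by right|exact: Hy].
    * exists a; split => // z; rewrite in_cons => /orP[/eqP->|zs] Pz; first by left.
      case: (Hy z zs Pz) => [->|rz]; right => //; exact: Htr rz r1.
  + exists y; split => // z; rewrite in_cons => /orP[/eqP->|zs] Pz; [by [] |exact: Hy].
- have Pa : P a.
    move: xin; rewrite in_cons => /orP[/eqP<-|xs] //; by case: nex; exists x.
  exists a; split => // z; rewrite in_cons => /orP[/eqP->|zs] Pz; first by left.
  by case: nex; exists z.
Qed.

Lemma last_pred {x s j} : path (adj src tgt) x s -> last x s = j -> s != [::] ->
  exists y, adj src tgt y j.
Proof.
elim: s x j => [|a s IH] x j //= /andP[xa pa] <- _.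
case: s IH pa xa => [|b s] IH pa xa /=; first by exists x.
exact: (IH a _ pa erefl isT).
Qed.

Lemma no_reach_input {x j} : is_input src tgt j -> ~ reach src tgt x j.
Proof.
move=> Hj [xj [s [ps ls]]].
have sn : s != [::] by case: s ps ls => //= _ ls.
have [y ayj] := last_pred ps ls sn.
have h1 : 0 < indeg tgt (src j) by apply/card_gt0P; exists y; rewrite inE.
have h2 : 0 < outdeg src (src j) by apply/card_gt0P; exists j; rewrite inE.
move: Hj; rewrite /is_input /boundary /deg => /eqP; lia.
Qed.

Lemma no_reach_output {x j} : is_output src tgt j -> ~ reach src tgt j x.
Proof.
move=> Hj [xj [s [ps ls]]].
case: s ps ls => [|a s] /=; first by move=> _ ls; rewrite ls in xj.
move=> /andP[aj _] _.
have h1 : 0 < outdeg src (tgt j) by apply/card_gt0P; exists a; rewrite inE eq_sym.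
have h2 : 0 < indeg tgt (tgt j) by apply/card_gt0P; exists j; rewrite inE.
move: Hj; rewrite /is_output /boundary /deg => /eqP; lia.
Qed.

Lemma adj_irr x : ~ adj src tgt x x.
Proof. case: Hprog => [Hac _] /eqP; exact: (Hac x [::] isT). Qed.

Lemma exists_input {e} : ~~ is_input src tgt e ->
  exists i, is_input src tgt i /\ reach src tgt i e.
Proof.
move=> He.
have [x [Px Hx]] := @ex_ext (fun a b => lt b a)
   (fun x y z a b => lttr b a) (fun x y n => ltac:(rewrite orbC; exact: lttot n))
   (fun x => x = e \/ reach src tgt x e) e (or_introl erefl).
have src0 : is_source tgt (src x).
  rewrite /is_source /indeg cards_eq0; apply/eqP/setP => y.
  rewrite inE in_set0; apply/negbTE/negP => ayx.
  have yx : y <> x by move=> eq; rewrite eq in ayx; exact: (@adj_irr x ayx).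
  have ryx : reach src tgt y x by split => //; exists [:: x]; rewrite /= andbT.
  have lyx := P1 ryx.
  have Py : y = e \/ reach src tgt y e.
    right; case: Px => [<-|[xe [s [ps ls]]]]; first done.
    have lxe : lt x e by apply: P1; split => //; exists s.
    split; first by move=> ye; subst y; exact: ltasym lyx lxe.
    by exists (x :: s); rewrite /= {1}/adj ayx ps.
  case: (Hx y Py) => [//|lxy]; exact: ltasym lxy lyx.
have inx : is_input src tgt x by case: Hprog => [_ [H _]]; exact: H.
exists x; split => //; case: Px => // xe; subst; by rewrite inx in He.
Qed.

Lemma exists_output {e} : ~~ is_output src tgt e ->
  exists o, is_output src tgt o /\ reach src tgt e o.
Proof.
move=> He.
have [x [Px Hx]] := @ex_ext lt (fun x y z a b => lttr a b) (fun x y n => lttot n)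
   (fun x => x = e \/ reach src tgt e x) e (or_introl erefl).
have snk : is_sink src (tgt x).
  rewrite /is_sink /outdeg cards_eq0; apply/eqP/setP => y.
  rewrite inE in_set0; apply/negbTE/negP => axy.
  have yx : x <> y by move=> eq; rewrite -eq in axy; rewrite eq_sym in axy; exact: (@adj_irr x axy).
  have rxy : reach src tgt x y by split => //; exists [:: y]; rewrite /= /adj (eqP axy) eqxx.
  have lxy := P1 rxy.
  have Py : y = e \/ reach src tgt e y.
    right; case: Px => [<-|[ex [s [ps ls]]]]; first done.
    have lex : lt e x by apply: P1; split => //; exists s.
    split; first by move=> ey; subst y; exact: ltasym lxy lex.
    exists (rcons s y); rewrite rcons_path last_rcons ps ls /adj (eqP axy) eqxx; done.
  case: (Hx y Py) => [eyx|lyx]; [by rewrite eyx in yx | exact: ltasym lxy lyx].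
have outx : is_output src tgt x by case: Hprog => [_ [_ H]]; exact: H.
exists x; split => //; case: Px => // xe; subst; by rewrite outx in He.
Qed.

Lemma part1 m inp : enumerates (is_input src tgt) lt m inp ->
  forall e k, ~~ is_input src tgt e -> 1 <= k <= m ->
      (inP lt m inp k e <-> is_iplus src tgt lt e (inp k)).
Proof.
move=> [Ein [Elt Eall]] e k He Hk.
have [i0 [ii0 ri0]] := exists_input He.
have [i [[ii ri] Hi]] := @ex_ext lt (fun x y z a b => lttr a b) (fun x y n => lttot n)
   (fun j => is_input src tgt j /\ reach src tgt j e) i0 (conj ii0 ri0).
have ip : is_iplus src tgt lt e i by split => //; split => // j ij rj; exact: Hi.
have [k0 Hk0 eik0] := Eall i ii.
have inPk0 : inP lt m inp k0 e.
  rewrite /inP; have l1 : lt (inp k0) e by rewrite -eik0; exact: P1 ri.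
  case: ifPn => km; last done.
  rewrite l1 /=.
  have ne : inp k0.+1 != e.
    apply/eqP => eq; move: He; rewrite -eq Ein //; lia.
  case/orP: (lttot ne) => // l2.
  have l3 : lt (inp k0) (inp k0.+1) by apply: Elt; lia.
  rewrite -eik0 in l3.
  case: (P2 l3 l2 ri) => r.
    by case: (no_reach_input (Ein k0.+1 ltac:(lia)) r).
  case: (Hi _ (conj (Ein k0.+1 ltac:(lia)) r)) => [eq|l4].
    by rewrite eq (negbTE (ltirr i)) in l3.
  by case: (ltasym l3 l4).
have nb : forall a b, 1 <= a -> a < b -> b <= m ->
    inP lt m inp a e -> inP lt m inp b e -> False.
  move=> a b a1 ab bm pa pb.
  have lb : lt (inp b) e by move: pb; rewrite /inP; case: ifP => _ // /andP[].
  have la : lt e (inp a.+1) by move: pa; rewrite /inP ifT; [case/andP | lia].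
  case: (eqVneq a.+1 b) => [eab|nab].
    by rewrite eab in la; case: (ltasym la lb).
  have : lt (inp a.+1) (inp b) by apply: Elt; lia.
  move=> l; exact: ltasym (lttr la l) lb.
have uq : forall a b, 1 <= a <= m -> 1 <= b <= m ->
    inP lt m inp a e -> inP lt m inp b e -> a = b.
  move=> a b Ha Hb pa pb; case: (ltngtP a b) => // ab.
    by case: (nb a b ltac:(lia) ab ltac:(lia) pa pb).
  by case: (nb b a ltac:(lia) ab ltac:(lia) pb pa).
have ui : forall a b, 1 <= a <= m -> 1 <= b <= m -> inp a = inp b -> a = b.
  move=> a b Ha Hb eab; case: (ltngtP a b) => // ab.
    by have := Elt a b ltac:(lia) ab ltac:(lia); rewrite eab (negbTE (ltirr _)).
  by have := Elt b a ltac:(lia) ab ltac:(lia); rewrite eab (negbTE (ltirr _)).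
split.
  move=> pk; rewrite (uq k k0 Hk Hk0 pk inPk0) -eik0; exact: ip.
move=> [ik [rk H]].
have e1 : i = inp k.
  case: (H i ii ri) => // l1.
  case: ip => _ [_ H2]; case: (H2 _ (Ein k Hk) rk) => [//|l2].
  by case: (ltasym l1 l2).
by rewrite (ui k k0 Hk Hk0 (esym (etrans (esym eik0) e1))).
Qed.

Lemma part2 n out : enumerates (is_output src tgt) lt n out ->
  forall e k, ~~ is_output src tgt e -> 1 <= k <= n ->
      (inQ lt out k e <-> is_ominus src tgt lt e (out k)).
Proof.
move=> [Ein [Elt Eall]] e k He Hk.
have [i0 [ii0 ri0]] := exists_output He.
have [i [[ii ri] Hi]] := @ex_ext (fun a b => lt b a) (fun x y z a b => lttr b a)
   (fun x y n => ltac:(rewrite orbC; exact: lttot n))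
   (fun j => is_output src tgt j /\ reach src tgt e j) i0 (conj ii0 ri0).
have ip : is_ominus src tgt lt e i by split => //; split => // j ij rj; exact: Hi.
have [k0 Hk0 eik0] := Eall i ii.
have inQk0 : inQ lt out k0 e.
  rewrite /inQ; have l1 : lt e (out k0) by rewrite -eik0; exact: P1 ri.
  case: ifPn => k1; first by rewrite -(eqP k1).
  rewrite l1 andbT.
  have ne : out k0.-1 != e.
    apply/eqP => eq; move: He; rewrite -eq Ein //; lia.
  case/orP: (lttot ne) => // l2.
  have l3 : lt (out k0.-1) (out k0) by apply: Elt; lia.
  rewrite -eik0 in l3.
  case: (P2 l2 l3 ri) => r; last first.
    by case: (no_reach_output (Ein k0.-1 ltac:(lia)) r).
  case: (Hi _ (conj (Ein k0.-1 ltac:(lia)) r)) => [eq|l4].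
    by rewrite eq (negbTE (ltirr i)) in l3.
  by case: (ltasym l3 l4).
have nb : forall a b, 1 <= a -> a < b -> b <= n ->
    inQ lt out a e -> inQ lt out b e -> False.
  move=> a b a1 ab bm pa pb.
  have lb : lt (out b.-1) e by move: pb; rewrite /inQ ifF; [case/andP | apply/eqP; lia].
  have la : lt e (out a) by move: pa; rewrite /inQ; case: ifPn => [/eqP -> //|_ /andP[]].
  case: (eqVneq a b.-1) => [eab|nab].
    by rewrite eab in la; case: (ltasym la lb).
  have : lt (out a) (out b.-1) by apply: Elt; lia.
  move=> l; exact: ltasym (lttr la l) lb.
have uq : forall a b, 1 <= a <= n -> 1 <= b <= n ->
    inQ lt out a e -> inQ lt out b e -> a = b.
  move=> a b Ha Hb pa pb; case: (ltngtP a b) => // ab.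
    by case: (nb a b ltac:(lia) ab ltac:(lia) pa pb).
  by case: (nb b a ltac:(lia) ab ltac:(lia) pb pa).
have ui : forall a b, 1 <= a <= n -> 1 <= b <= n -> out a = out b -> a = b.
  move=> a b Ha Hb eab; case: (ltngtP a b) => // ab.
    by have := Elt a b ltac:(lia) ab ltac:(lia); rewrite eab (negbTE (ltirr _)).
  by have := Elt b a ltac:(lia) ab ltac:(lia); rewrite eab (negbTE (ltirr _)).
split.
  move=> pk; rewrite (uq k k0 Hk Hk0 pk inQk0) -eik0; exact: ip.
move=> [ik [rk H]].
have e1 : i = out k.
  case: (H i ii ri) => // l1.
  case: ip => _ [_ H2]; case: (H2 _ (Ein k Hk) rk) => [//|l2].
  by case: (ltasym l1 l2).
by rewrite (ui k k0 Hk Hk0 (esym (etrans (esym eik0) e1))).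
Qed.
End H.

Theorem lemma3p3 (V E : finType) (src tgt : E -> V) (lt : rel E)
  (m n : nat) (inp out : nat -> E) :
  progressive src tgt ->
  planar_order src tgt lt ->
  enumerates (is_input src tgt) lt m inp ->
  enumerates (is_output src tgt) lt n out ->
  (forall (e : E) (k : nat), ~~ is_input src tgt e -> 1 <= k <= m ->
      (inP lt m inp k e <-> is_iplus src tgt lt e (inp k))) /\
  (forall (e : E) (k : nat), ~~ is_output src tgt e -> 1 <= k <= n ->
      (inQ lt out k e <-> is_ominus src tgt lt e (out k))).
Proof.
move=> Hp Hl Ei Eo; split; [exact: part1 | exact: part2].
Qed.
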